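(* As formal power series in $y$, \[ \sum_{n\ge0}R_n(x)y^n=\frac{1+y+x^3y^3-xy^4}{1-(1+x+x^2)y^2+x^2y^4}+xy . \]
   Context: For $n\ge1$ let $\Xi_n$ be the poset on $\{x_1,\dots,x_n\}$ whose cover relations are exactly: $x_2\prec x_1$, $x_3\prec x_2$, and for $3\le i\le n-1$, $x_i\prec x_{i+1}$ if $i$ is odd and $x_{i+1}\prec x_i$ if $i$ is even (so $x_1>x_2>x_3<x_4>x_5<\cdots$). A filter of a poset is an up-closed subset. $\Omega_n$ is the lattice of filters of $\Xi_n$ under reverse inclusion; $\Omega_0$ is the one-element lattice. $R_n(x)=\sum_{F\in\Omega_n}x^{\,n-|F|}$ is the rank generating function of $\Omega_n$, with $R_0(x)=1$. *)

(* Defs.v *)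
From HB Require Import structures.
From mathcomp Require Import all_boot all_order all_algebra.
Set Implicit Arguments. Unset Strict Implicit. Unset Printing Implicit Defensive.
Import GRing.Theory.
Local Open Scope ring_scope.

(* The element x_(a+1) of Xi_n is represented by a : 'I_n (0-indexed). *)

(* xi_cover n a b  <=>  x_(a+1) is covered by x_(b+1) in Xi_n, i.e.
   x_(a+1) \prec x_(b+1), using the cover relations of the paper:
   x_2 < x_1, x_3 < x_2, and for 3 <= i <= n-1:
   x_i < x_(i+1) if i odd, x_(i+1) < x_i if i even. *)
Definition xi_cover (n : nat) : rel 'I_n := fun a b =>
  let l := (val a).+1 in let u := (val b).+1 in
  [|| (l == 2) && (u == 1)%N,
      (l == 3) && (u == 2)%N,
      [&& (3 <= l)%N, odd l & u == l.+1]
    | [&& (3 <= u)%N, ~~ odd u & l == u.+1]].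

Definition xi_le (n : nat) (a b : 'I_n) : bool := connect (@xi_cover n) a b.

Definition is_filter (n : nat) (F : {set 'I_n}) : bool :=
  [forall a, forall b, (a \in F) && xi_le a b ==> (b \in F)].

Definition R (n : nat) : {poly int} :=
  \sum_(F : {set 'I_n} | is_filter F) 'X^(n - #|F|).

(* Formal power series in y with coefficients in Z[x], as coefficient
   sequences, with the Cauchy product. *)
Definition fps := nat -> {poly int}.
Definition fps_mul (f g : fps) : fps :=
  fun n => \sum_(k < n.+1) f k * g (n - k)%N.

Definition numer : fps := fun n =>
  match n with
  | 0 => 1 | 1 => 1 | 3 => 'X^3 | 4 => - 'X | _ => 0
  end.

Definition denom : fps := fun n =>
  match n with
  | 0 => 1 | 2 => - (1 + 'X + 'X^2) | 4 => 'X^2 | _ => 0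
  end.

Definition xy : fps := fun n => if n == 1%N then 'X else 0.

Definition Rser : fps := fun n => R n.

(* Main.v *)
Require Import Defs.
From Stdlib Require Import FunctionalExtensionality.
From mathcomp Require Import all_boot all_order all_algebra ring zify.
Set Implicit Arguments. Unset Strict Implicit. Unset Printing Implicit Defensive.
Import GRing.Theory.
Local Open Scope ring_scope.

Definition cov (l u : nat) : bool :=
  [|| (l == 2) && (u == 1)%N,
      (l == 3) && (u == 2)%N,
      [&& (3 <= l)%N, odd l & u == l.+1]
    | [&& (3 <= u)%N, ~~ odd u & l == u.+1]]%N.

Lemma xi_coverE n (a b : 'I_n) : xi_cover a b = cov (val a).+1 (val b).+1.
Proof. by []. Qed.

Lemma cov_near l u : cov l u -> u = l.+1 \/ l = u.+1.
Proof.
by case/or4P => [/andP[/eqP-> /eqP->]|/andP[/eqP-> /eqP->]|/and3P[_ _ /eqP->]|/and3P[_ _ /eqP->]]; auto.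
Qed.

Definition upclosed n (F : {set 'I_n}) :=
  [forall a, forall b, xi_cover a b ==> (a \in F) ==> (b \in F)].

Lemma filterE n (F : {set 'I_n}) : is_filter F = upclosed F.
Proof.
apply/idP/idP.
  move/forallP => H; apply/forallP=> a; apply/forallP=> b; apply/implyP=> hc.
  apply/implyP=> ha; have := forallP (H a) b; by rewrite ha /xi_le (connect1 hc).
move=> H; apply/forallP=> a; apply/forallP=> b; apply/implyP=> /andP[ha /connectP[p hp ->]].
elim: p a ha hp => [//|c p IH] a ha /= /andP[hac hp].
apply: IH hp; have := forallP (forallP H a) c; by rewrite hac ha.
Qed.

Definition ext n (F : {set 'I_n}) (b : bool) : {set 'I_n.+1} :=
  [set i | if unlift ord_max i is Some j then j \in F else b].

Lemma mem_ext_max n (F : {set 'I_n}) b : (ord_max \in ext F b) = b.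
Proof. by rewrite inE unlift_none. Qed.

Lemma mem_ext_low n (F : {set 'I_n}) b j : (lift ord_max j \in ext F b) = (j \in F).
Proof. by rewrite inE liftK. Qed.

Lemma card_ext n (F : {set 'I_n}) b : #|ext F b| = (b + #|F|)%N.
Proof.
rewrite (cardsD1 ord_max) mem_ext_max; congr (_ + _)%N.
have -> : ext F b :\ ord_max = [set lift ord_max j | j in F].
  apply/setP => i; rewrite !inE; case: (unliftP ord_max i) => [j ->|->].
    rewrite (mem_imset _ _ (@lift_inj _ ord_max)).
    by rewrite eq_sym neq_lift.
  rewrite eqxx /=; apply/esym/imsetP => -[j _ /eqP]; by rewrite (negbTE (neq_lift _ _)).
by rewrite card_imset //; apply: lift_inj.
Qed.

Definition res n (G : {set 'I_n.+1}) : {set 'I_n} := [set j | lift ord_max j \in G].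

Lemma sum_ext n (P : pred {set 'I_n.+1}) (f : {set 'I_n.+1} -> {poly int}) :
  \sum_(G | P G) f G = \sum_(F : {set 'I_n}) \sum_(b : bool | P (ext F b)) f (ext F b).
Proof.
rewrite pair_big_dep /= (reindex (fun p : {set 'I_n} * bool => ext p.1 p.2)) //=.
exists (fun G => (res G, ord_max \in G)) => [[F b] _ | G _] /=.
  rewrite mem_ext_max; congr (_, _); apply/setP => j; by rewrite inE mem_ext_low.
apply/setP => i; case: (unliftP ord_max i) => [j ->|->].
  by rewrite mem_ext_low inE.
by rewrite mem_ext_max.
Qed.

Lemma val_lift_max n (j : 'I_n) : val (lift ord_max j) = val j.
Proof. exact: lift_max. Qed.

Definition cond n (c b : bool) := (cov n.+1 n.+2 ==> c ==> b) && (cov n.+2 n.+1 ==> b ==> c).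

Lemma ext_closed n (F : {set 'I_n.+1}) b :
  upclosed (ext F b) = upclosed F && cond n (ord_max \in F) b.
Proof.
apply/idP/idP.
  move=> H; apply/andP; split.
    apply/forallP => a; apply/forallP => c; apply/implyP => hc; apply/implyP => ha.
    have := forallP (forallP H (lift ord_max a)) (lift ord_max c).
    by rewrite !xi_coverE !val_lift_max -xi_coverE hc !mem_ext_low ha.
  have := forallP (forallP H (lift ord_max ord_max)) ord_max.
  have := forallP (forallP H ord_max) (lift ord_max ord_max).
  by rewrite !xi_coverE !val_lift_max !mem_ext_low mem_ext_max /= => h1 h2; rewrite /cond h1 h2.
case/andP => HF /andP[h1 h2].
apply/forallP => a; apply/forallP => c; apply/implyP; rewrite xi_coverE.
case: (unliftP ord_max a) => [ja ->|->]; case: (unliftP ord_max c) => [jc ->|->];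
  rewrite ?val_lift_max ?mem_ext_low ?mem_ext_max /=.
- rewrite -xi_coverE => hc; exact: (implyP (forallP (forallP HF ja) jc) hc).
- move=> hc; have E : ja = ord_max.
    apply/val_inj => /=; have := ltn_ord ja; case: (cov_near hc) => /=; lia.
  move: hc; rewrite E /= => hc; exact: (implyP h1 hc).
- move=> hc; have E : jc = ord_max.
    apply/val_inj => /=; have := ltn_ord jc; case: (cov_near hc) => /=; lia.
  move: hc; rewrite E /= => hc; exact: (implyP h2 hc).
- by move=> _; apply/implyP.
Qed.

Definition w (b : bool) : {poly int} := if b then 1 else 'X.

Definition T n (g : bool -> {poly int}) :=
  \sum_(F : {set 'I_n.+1} | is_filter F) 'X^(n.+1 - #|F|) * g (ord_max \in F).

Lemma wexp n (F : {set 'I_n}) b :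
  'X^(n.+1 - #|ext F b|) = 'X^(n - #|F|) * w b :> {poly int}.
Proof.
have := max_card F; rewrite card_ord card_ext => hF.
case: b => /=; first by rewrite add1n subSS mulr1.
by rewrite add0n subSn // exprS mulrC.
Qed.

Lemma T_step n g : T n.+1 g = T n (fun c => \sum_(b : bool | cond n c b) w b * g b).
Proof.
rewrite /T sum_ext big_mkcond [RHS]big_mkcond /=; apply: eq_bigr => F _.
rewrite big_distrr /=.
case hF: (is_filter F) => /=.
  apply: eq_big => [b|b hb]; first by rewrite !filterE ext_closed -filterE hF.
  by rewrite wexp mem_ext_max mulrA.
by rewrite big1 // => b; rewrite !filterE ext_closed -filterE hF.
Qed.

Lemma sum_I0 (h : {set 'I_0} -> {poly int}) : \sum_F h F = h set0.
Proof.
rewrite (big_pred1 (set0 : {set 'I_0})) // => F /=; apply/esym/eqP/setP => -[i hi] //.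
Qed.

Lemma closed1 (G : {set 'I_1}) : upclosed G.
Proof.
apply/forallP => -[[|//] ?]; apply/forallP => -[[|//] ?] //.
Qed.

Lemma T0 g : T 0 g = g true + 'X * g false.
Proof.
rewrite /T sum_ext sum_I0 big_mkcond big_bool !filterE !closed1 /=.
by rewrite !card_ext cards0 !mem_ext_max /= expr0 expr1 mul1r.
Qed.

Definition down n := if n is 0 then true else odd n.

Lemma cond_down n c b : down n -> cond n c b = (b ==> c).
Proof.
rewrite /cond /cov; case: n => [|[|n]] /= H; case: c; case: b => //=;
rewrite ?eqxx !eqSS ?negbK ?andbT ?andbF //= ?orbF; have -> : (n == n.+2) = false by lia.
all: by move: H; case: (odd n).
Qed.

Lemma cond_up n c b : ~~ down n -> cond n c b = (c ==> b).
Proof.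
rewrite /cond /cov; case: n => [|[|n]] //= H; case: c; case: b => //=;
rewrite ?eqxx !eqSS ?negbK ?andbT ?andbF //= ?orbF ?orbT; have -> : (n == n.+2) = false by lia.
all: by move: H; case: (odd n).
Qed.

Definition step n (p : {poly int} * {poly int}) :=
  if down n then (p.1, 'X * (p.1 + p.2)) else (p.1 + p.2, 'X * p.2).

Fixpoint ab n := if n is m.+1 then step m (ab m) else (1, 'X).

Lemma sumb (P : pred bool) (F : bool -> {poly int}) :
  \sum_(b | P b) F b = (if P true then F true else 0) + (if P false then F false else 0).
Proof. by rewrite big_mkcond big_bool. Qed.

Lemma T_ab n g : T n g = (ab n).1 * g true + (ab n).2 * g false.
Proof.
elim: n g => [|n IH] g; first by rewrite T0 /= mul1r.
rewrite T_step IH /= /step; case hd: (down n).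
  rewrite !sumb !cond_down ?hd //= /w; ring.
rewrite !sumb !cond_up ?hd //= /w; ring.
Qed.

Definition s n := (ab n).1 + (ab n).2.

Lemma RS n : R n.+1 = s n.
Proof.
have := T_ab n (fun _ => 1); rewrite !mulr1 /s => <-.
by rewrite /R /T; apply: eq_bigr => F _; rewrite mulr1.
Qed.

Lemma R0 : R 0 = 1.
Proof.
rewrite /R big_mkcond sum_I0 filterE.
have -> : upclosed (set0 : {set 'I_0}) by apply/forallP => -[].
by rewrite cards0 expr0.
Qed.

Lemma s_rec m : s m.+4.+1 = (1 + 'X + 'X^2) * s m.+3 - 'X^2 * s m.+1.
Proof.
rewrite /s /=; case: (ab m.+1) => a b; rewrite /step /=.
case: (odd m) => /=; ring.
Qed.

Theorem mainTheorem6 :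
  fps_mul denom (fun n => Rser n - xy n) = numer.
Proof.
apply: functional_extensionality => N.
rewrite /fps_mul -(big_mkord xpredT (fun k => denom k * (Rser (N - k)%N - xy (N - k)%N))).
case: N => [|[|[|[|[|[|m]]]]]];
  try by rewrite /index_iota subn0 /= !big_cons big_nil /Rser ?subSS ?subn0 ?sub0n ?subnn /= ?R0 ?RS /s /= /xy /=; ring.
do 5 rewrite big_ltn //.
rewrite big_nat_cond big1 => [|k /andP[/andP[hk _] _]]; last first.
  by case: k hk => [|[|[|[|[|k]]]]] // _; rewrite mul0r.
rewrite !subSS !subn0 /Rser /xy /= !RS s_rec; ring.
Qed.
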